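(* Let $A=\Bbbk Q/I$ be a finite-dimensional triangular monomial algebra, let $m,n>0$, and let $x\in\Bbbk(\Gamma_{m-1}\|\mathcal B)$ and $y\in\Bbbk(\Gamma_{n-1}\|\mathcal B)$ be irreducible cocycles. If $x\smile y\ne 0$, then $y\smile x=0$ (at the cochain level).
   Context: Let $\Bbbk$ be a field, $Q=(Q_0,Q_1,s,t)$ a finite quiver, and $A=\Bbbk Q/I$ a finite-dimensional monomial algebra, i.e. $I$ is an ideal generated by paths of length at least $2$. $A$ is triangular if $Q$ has no oriented cycles. Let $E=\Bbbk Q_0$, $A^e=A\otimes_\Bbbk A^{\mathrm{op}}$. Paths are written from right to left ($p=\alpha_n\cdots\alpha_1$, $t(\alpha_i)=s(\alpha_{i+1})$); $qp$ is concatenation. $\mathcal B$ = set of paths not in $I$ (a basis of $A$). If $p=bqa$, $q$ is a divisor; $q\le p$ denotes an occurrence with $\mathrm{pre}_p(q)=a$, $\mathrm{suf}_p(q)=b$; suffix/prefix mean $b$/$a$ trivial; proper means $q\ne p$. For $n\ge -1$, a left $n$-ambiguity is a path $p=u_{-1}u_0\cdots u_n$ with $u_{-1}\in Q_0$, $u_0\in Q_1$, $u_i\in\mathcal B$, and for $0\le i\le n-1$, $u_iu_{i+1}\in I$ while no proper suffix of $u_iu_{i+1}$ lies in $I$; a right $n$-ambiguity is $p=v_n\cdots v_0v_{-1}$ with $v_{-1}\in Q_0$, $v_0\in Q_1$, $v_i\in\mathcal B$, $v_{i+1}v_i\in I$ and no proper prefix of $v_{i+1}v_i$ in $I$. These notions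 coincide; $\Gamma_n$ is the set of $n$-ambiguities; decompositions are unique; $\sigma_m(p):=u_0\cdots u_m$, $\pi_m(p):=v_m\cdots v_0$; $\mathrm{Sub}(p)=\{q\in\Gamma_{n-1}:q\le p\}$. Bardzell's resolution: $\mathbb B(A)_{n+1}=A\otimes_E\Bbbk\Gamma_n\otimes_EA$, with $d(1\otimes p\otimes1)=\sum_{q\in\mathrm{Sub}(p)}\mathrm{suf}_p(q)\otimes q\otimes\mathrm{pre}_p(q)$ for $p\in\Gamma_n$, $n$ odd, and $d(1\otimes p\otimes1)=\mathrm{suf}_p(\pi_{n-1}(p))\otimes\pi_{n-1}(p)\otimes1-1\otimes\sigma_{n-1}(p)\otimes\mathrm{pre}_p(\sigma_{n-1}(p))$ for $n$ even. Let $\Bbbk(\Gamma_n\|\mathcal B):=\mathrm{Hom}_{E^e}(\Bbbk\Gamma_n,A)\cong\mathrm{Hom}_{A^e}(\mathbb B(A)_{n+1},A)$ (cochains of degree $n+1$); it has basis the maps $(p\|b)$ for $p\in\Gamma_n$, $b\in\mathcal B$ parallel to $p$, where $(p\|b)(q)=b$ if $q=p$ and $0$ for other $q\in\Gamma_n$. The differential is $(\partial f)(q)=\hat f(d(1\otimes q\otimes 1))$ with $\hat f(c\otimes p\otimes a)=c\,f(p)\,a$. A cocycle $x=\sum_{i=1}^k\alpha_i(p_i\|b_i)$ with all $\alpha_i\ne0$ and the $(p_i\|b_i)$ pairwise distinct is irreducible if for every proper nonempty subsequence $i_1<\dots<i_\ell$ ($\ell<k$) and all nonzero $\beta_j\in\Bbbk$,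 $\partial(\sum_j\beta_j(p_{i_j}\|b_{i_j}))\ne0$. Cup product of cochains: for $g\in\Bbbk(\Gamma_{j-1}\|\mathcal B)$ and $f\in\Bbbk(\Gamma_{i-1}\|\mathcal B)$, $g\smile f\in\Bbbk(\Gamma_{i+j-1}\|\mathcal B)$ is $(g\smile f)(q)=\sum e\,g(p_2)\,c\,f(p_1)\,a$ for $q\in\Gamma_{i+j-1}$, the sum running over all ways of writing $q=e\,p_2\,c\,p_1\,a$ as a concatenation of paths with $p_1\in\Gamma_{i-1}$, $p_2\in\Gamma_{j-1}$, and products taken in $A$. In particular $((p_2\|b_2)\smile(p_1\|b_1))(q)=\sum_{q=e p_2 c p_1 a}e\,b_2\,c\,b_1\,a$. *)

(* Defs.v *)
From mathcomp Require Import all_boot all_algebra.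
Set Implicit Arguments.
Unset Strict Implicit.
Unset Printing Implicit Defensive.
Import GRing.Theory.
Local Open Scope ring_scope.

Fixpoint cuts (T : Type) (w : seq T) (k : nat) {struct k} : seq (seq (seq T)) :=
  match k with
  | 0 => if w is [::] then [:: [::]] else [::]
  | k'.+1 => flatten [seq [seq take i w :: c | c <- cuts (drop i w) k']
                     | i <- iota 0 (size w).+1]
  end.

Section Bardzell.
(* A finite quiver Q = (V, Ar, src, tgt), a field K, and a finite list of
   generating paths [rels] of the monomial ideal I. *)
Variables (K : fieldType) (V Ar : finType) (src tgt : Ar -> V)
          (rels : seq (seq Ar)).

(* CONVENTION: a path is a pair (v, w) where w is the list of arrows in the
   WRITTEN (right-to-left) order: the path alpha_n ... alpha_1 is
   (s(alpha_1), [:: alpha_n; ...; alpha_1]); v is the source vertex.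
   The trivial path e_v is (v, [::]).  Concatenation q p is (p.1, q.2 ++ p.2). *)
Definition qpath := (V * seq Ar)%type.

Definition chainw (w : seq Ar) : bool := sorted (fun b c => src b == tgt c) w.
Definition ptgt (p : qpath) : V := if p.2 is a :: _ then tgt a else p.1.
Definition valid (p : qpath) : bool :=
  chainw p.2 && (if p.2 is a :: w' then src (last a w') == p.1 else true).

(* monomial ideal generated by rels: a path lies in I iff it has a generator
   as a divisor *)
Definition inI (w : seq Ar) : bool := has (fun r => infix r w) rels.
Definition inB (p : qpath) : bool := valid p && ~~ inI p.2.
Definition parallel (p r : qpath) : bool := (p.1 == r.1) && (ptgt p == ptgt r).

Definition triangular : Prop :=
  forall p : qpath, valid p -> p.2 != [::] -> ptgt p != p.1.

(* the subpath of q occupying the written positions [i, j) *)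
Definition sub (q : qpath) (i j : nat) : qpath :=
  (ptgt (q.1, drop j q.2), drop i (take j q.2)).

(* Elements of A = kQ/I, as coefficient functions on paths (supported on B). *)
Definition Aelt := qpath -> K.
Definition emb (p : qpath) : Aelt := fun r => if inB p && (r == p) then 1 else 0.
Definition mulA (a b : Aelt) : Aelt := fun r =>
  if inB r then \sum_(i < (size r.2).+1) a (sub r 0 i) * b (sub r i (size r.2))
  else 0.

Definition no_proper_suffix_in_I (c : seq Ar) : bool :=   (* paper's "suffix" = left end *)
  all (fun k => ~~ inI (take k c)) (iota 0 (size c)).
Definition no_proper_prefix_in_I (c : seq Ar) : bool :=   (* paper's "prefix" = right end *)
  all (fun k => ~~ inI (drop k c)) (iota 1 (size c)).

(* us = [:: u_0; ...; u_n], p = u_{-1} u_0 ... u_n *)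
Definition is_left_dec (n : nat) (w : seq Ar) (us : seq (seq Ar)) : bool :=
  [&& size us == n.+1, flatten us == w, size (head [::] us) == 1%N,
      all (fun u => ~~ inI u) us &
      all (fun i => let c := nth [::] us i ++ nth [::] us i.+1 in
                    inI c && no_proper_suffix_in_I c) (iota 0 n)].
(* vs = [:: v_0; ...; v_n], p = v_n ... v_0 v_{-1} *)
Definition is_right_dec (n : nat) (w : seq Ar) (vs : seq (seq Ar)) : bool :=
  [&& size vs == n.+1, flatten (rev vs) == w, size (head [::] vs) == 1%N,
      all (fun u => ~~ inI u) vs &
      all (fun i => let c := nth [::] vs i.+1 ++ nth [::] vs i in
                    inI c && no_proper_prefix_in_I c) (iota 0 n)].

Definition Gamma (n : nat) (p : qpath) : bool :=
  valid p && has (is_left_dec n p.2) (cuts p.2 n.+1).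

(* the (unique) left / right decompositions *)
Definition ldec (n : nat) (w : seq Ar) : seq (seq Ar) :=
  head [::] [seq us <- cuts w n.+1 | is_left_dec n w us].
Definition rdec (n : nat) (w : seq Ar) : seq (seq Ar) :=
  head [::] [seq vs <- [seq rev c | c <- cuts w n.+1] | is_right_dec n w vs].
(* for q in Gamma_{n+1}: lengths of sigma_n(q) = u_0...u_n and
   pi_n(q) = v_n ... v_0 *)
Definition sigma_len (n : nat) (q : qpath) : nat :=
  size (flatten (take n.+1 (ldec n.+1 q.2))).
Definition pi_len (n : nat) (q : qpath) : nat :=
  size (flatten (take n.+1 (rdec n.+1 q.2))).

(* Cochains: f p r = coefficient of the basis path r in f(p). *)
Definition cochain := qpath -> Aelt.

Definition is_cochain (n : nat) (f : cochain) : Prop :=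
  forall p r, f p r != 0 -> [&& Gamma n p, inB r & parallel p r].

Definition cochain_zero (N : nat) (c : cochain) : Prop :=
  forall q, Gamma N q -> forall r, c q r = 0.

(* Differential k(Gamma_n || B) -> k(Gamma_{n+1} || B) induced by Bardzell's
   differential on q in Gamma_{n+1}. *)
Definition dcoch (n : nat) (f : cochain) : cochain := fun q r =>
  let S := size q.2 in
  if odd n.+1 then
    \sum_(i < S.+1) \sum_(j < S.+1)
      (if (i <= j)%N && Gamma n (sub q i j) then
         mulA (mulA (emb (sub q 0 i)) (f (sub q i j))) (emb (sub q j S)) r
       else 0)
  else
    mulA (emb (sub q 0 (S - pi_len n q))) (f (sub q (S - pi_len n q) S)) r
    - mulA (f (sub q 0 (sigma_len n q))) (emb (sub q (sigma_len n q) S)) r.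

Definition cocycle (n : nat) (f : cochain) : Prop := cochain_zero n.+1 (dcoch n f).

Definition irreducible (n : nat) (x : cochain) : Prop :=
  cocycle n x /\
  forall g : cochain,
    (forall p r, g p r != 0 -> x p r != 0) ->
    (exists p r, (x p r != 0) && (g p r == 0)) ->
    (exists p r, g p r != 0) ->
    ~ cocycle n g.

(* cup product g \smile f, for g in k(Gamma_a||B), f in k(Gamma_b||B):
   (g \smile f)(q) = sum over q = e p2 c p1 a' of e g(p2) c f(p1) a'. *)
Definition cup (a b : nat) (g f : cochain) : cochain := fun q r =>
  let S := size q.2 in
  \sum_(i1 < S.+1) \sum_(i2 < S.+1) \sum_(i3 < S.+1) \sum_(i4 < S.+1)
    (if [&& (i1 <= i2)%N, (i2 <= i3)%N, (i3 <= i4)%N,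
            Gamma a (sub q i1 i2) & Gamma b (sub q i3 i4)] then
       mulA (mulA (mulA (mulA (emb (sub q 0 i1)) (g (sub q i1 i2)))
                              (emb (sub q i2 i3)))
                  (f (sub q i3 i4)))
            (emb (sub q i4 S)) r
     else 0).

End Bardzell.

(* Main.v *)
Require Import Defs.
From mathcomp Require Import all_boot all_algebra.
Set Implicit Arguments. Unset Strict Implicit. Unset Printing Implicit Defensive.

Section Paths.
Variables (V Ar : finType) (src tgt : Ar -> V).
Hypothesis Htri : triangular src tgt.

Local Notation valid := (valid src tgt).
Local Notation ptgt := (ptgt tgt).

Lemma valid_nil v : valid (v, [::]).
Proof. by []. Qed.

Lemma valid_cons v a w : valid (v, a :: w) = (src a == ptgt (v, w)) && valid (v, w).
Proof.
rewrite /Defs.valid /chainw /=.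
case: w => [|b w] /=; first by rewrite andbT.
by rewrite andbA.
Qed.

Lemma ptgt_cat v w1 w2 : ptgt (v, w1 ++ w2) = ptgt (ptgt (v, w2), w1).
Proof. by case: w1. Qed.

Lemma valid_cat v w1 w2 : valid (v, w1 ++ w2) = valid (ptgt (v, w2), w1) && valid (v, w2).
Proof.
elim: w1 => [|a w1 IH]; first by rewrite valid_nil.
by rewrite !valid_cons IH ptgt_cat andbA.
Qed.

Definition R (u z : V) := exists w, valid (u, w) && (ptgt (u, w) == z).

Lemma R_refl u : R u u.
Proof. rewrite /R; by exists [::]; rewrite valid_nil eqxx. Qed.

Lemma R_trans u z t : R u z -> R z t -> R u t.
Proof.
move=> [w1 /andP[v1 /eqP e1]] [w2 /andP[v2 /eqP e2]].
rewrite /R; exists (w2 ++ w1); by rewrite valid_cat ptgt_cat e1 v1 v2 e2 eqxx.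
Qed.

Lemma R_arrow a : R (src a) (tgt a).
Proof. rewrite /R; exists [:: a]; by rewrite valid_cons /= !eqxx. Qed.

Lemma R_cycle a : R (tgt a) (src a) -> False.
Proof.
move=> [w /andP[vw /eqP e]].
have := Htri (p := (tgt a, a :: w)).
by rewrite valid_cons e eqxx vw /= eqxx => /(_ isT isT).
Qed.

Lemma R_mem v w a : valid (v, w) -> a \in w -> R v (src a) /\ R (tgt a) (ptgt (v, w)).
Proof.
move=> vw aw; move: vw; case/splitPr: aw => w1 w2.
rewrite valid_cat valid_cons => /and3P[v1 /eqP e v2].
split; rewrite /R; first by exists w2; rewrite v2 e eqxx.
by exists w1; rewrite v1 ptgt_cat /= eqxx.
Qed.

Lemma valid_uniq v w : valid (v, w) -> uniq w.
Proof.
elim: w => [|a w IH] //=.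
rewrite valid_cons => /andP[/eqP e vw].
rewrite IH // andbT; apply/negP => aw.
have [_ H] := R_mem vw aw.
by apply: (@R_cycle a); rewrite e.
Qed.

Lemma L_eq v w b : valid (v, w) -> valid (v, b) -> ptgt (v, w) = ptgt (v, b) ->
  w =i b -> w = b.
Proof.
elim: w b => [|a w IH] b.
  case: b => // z b _ _ _ /(_ z); by rewrite inE eqxx.
case: b => [|c b]; first by move=> _ _ _ /(_ a); rewrite inE eqxx.
rewrite !valid_cons => /andP[/eqP ea vw] /andP[/eqP ec vb] /= etgt Hi.
have ac : a = c.
  apply/eqP; apply/negP => /negP nac.
  have ab : a \in b by move: (Hi a); rewrite !inE eqxx /= (negbTE nac) /=.
  have [_ H] := R_mem vb ab.
  apply: (@R_cycle c); rewrite ec; have et : tgt a = tgt c by exact: etgt.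
  by rewrite -et.
subst c; congr (_ :: _); apply: IH => //; first by rewrite -ea.
have /andP[aw _] : uniq (a :: w) by apply: (@valid_uniq v); rewrite valid_cons ea eqxx vw.
have /andP[ab _] : uniq (a :: b) by apply: (@valid_uniq v); rewrite valid_cons ec eqxx vb.
move=> z.
move: (Hi z); rewrite !inE.
case: (eqVneq z a) => [->|] //=.
by rewrite (negbTE aw) (negbTE ab).
Qed.

Definition vtx (q : qpath V Ar) k := ptgt (q.1, drop k q.2).

Lemma take_drop_cat (w : seq Ar) i j : (i <= j)%N -> drop i (take j w) ++ drop j w = drop i w.
Proof.
move=> ij.
have [jl|lj] := leqP j (size w).
  rewrite -{3}(cat_take_drop j w) drop_cat size_takel //.
  case: ltnP => // ji.
  have -> : i = j by apply/eqP; rewrite eqn_leq ij.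
  by rewrite subnn drop0 drop_oversize // size_takel.
rewrite take_oversize; last exact: ltnW.
by rewrite (drop_oversize (ltnW lj)) cats0.
Qed.

Lemma valid_sub q i j : valid q -> (i <= j)%N -> valid (sub tgt q i j).
Proof.
case: q => v w /= vq ij.
rewrite /sub /=.
have h1 : valid (ptgt (v, drop j w), take j w).
  by move: vq; rewrite -{1}(cat_take_drop j w) valid_cat => /andP[].
by move: h1; rewrite -{1}(cat_take_drop i (take j w)) valid_cat => /andP[_].
Qed.

Lemma sub_fst q i j : (sub tgt q i j).1 = vtx q j.
Proof. by []. Qed.

Lemma sub_ptgt q i j : (i <= j)%N -> ptgt (sub tgt q i j) = vtx q i.
Proof.
move=> ij; rewrite /sub /vtx /= -ptgt_cat.
by rewrite take_drop_cat.
Qed.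

Lemma R_sub q i j : valid q -> (i <= j)%N -> R (vtx q j) (vtx q i).
Proof.
move=> vq ij; rewrite /R; exists (sub tgt q i j).2.
have := valid_sub vq ij; have := sub_ptgt q ij.
rewrite /sub /= => -> ->; by rewrite eqxx.
Qed.

End Paths.

Import GRing.Theory.
Local Open Scope ring_scope.

Section Alg.
Variables (K : fieldType) (V Ar : finType) (src tgt : Ar -> V) (rels : seq (seq Ar)).

Local Notation mulA := (@Defs.mulA K V Ar src tgt rels).
Local Notation emb := (@Defs.emb K V Ar src tgt rels).
Local Notation sub := (@Defs.sub V Ar tgt).
Local Notation inB := (@Defs.inB V Ar src tgt rels).

Lemma emb_nz E s : emb E s != 0 -> s = E.
Proof. by rewrite /Defs.emb; case: ifP => [/andP[_ /eqP]|]; rewrite ?eqxx. Qed.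

Lemma sub_0 (r : qpath V Ar) i : (sub r 0 i).2 = take i r.2.
Proof. by rewrite /Defs.sub /= drop0. Qed.

Lemma sub_S (r : qpath V Ar) i : (sub r i (size r.2)).2 = drop i r.2.
Proof. by rewrite /Defs.sub /= take_size. Qed.

Lemma mulA_extl (E : qpath V Ar) (F F' : Aelt K V Ar) r :
  (forall b, inB r -> r.2 = E.2 ++ b.2 -> F b = F' b) ->
  mulA (emb E) F r = mulA (emb E) F' r.
Proof.
move=> H; rewrite /Defs.mulA; case Br: (inB r) => //.
apply: eq_bigr => i _.
have [->|nz] := eqVneq (emb E (sub r 0 i)) 0; first by rewrite !mul0r.
congr (_ * _); apply: H => //.
by rewrite -(emb_nz nz) sub_0 sub_S cat_take_drop.
Qed.

Lemma mulA_extr (A : qpath V Ar) (F F' : Aelt K V Ar) r :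
  (forall b, inB r -> r.2 = b.2 ++ A.2 -> F b = F' b) ->
  mulA F (emb A) r = mulA F' (emb A) r.
Proof.
move=> H; rewrite /Defs.mulA; case Br: (inB r) => //.
apply: eq_bigr => i _.
have [->|nz] := eqVneq (emb A (sub r i (size r.2))) 0; first by rewrite !mulr0.
congr (_ * _); apply: H => //.
by rewrite -(emb_nz nz) sub_0 sub_S cat_take_drop.
Qed.

Lemma mulA_ext3 (E A : qpath V Ar) (F F' : Aelt K V Ar) r :
  (forall b, inB r -> r.2 = E.2 ++ b.2 ++ A.2 -> F b = F' b) ->
  mulA (mulA (emb E) F) (emb A) r = mulA (mulA (emb E) F') (emb A) r.
Proof.
move=> H; apply: mulA_extr => s Br es.
apply: mulA_extl => b _ eb; apply: H => //.
by rewrite es eb catA.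
Qed.

Lemma mulA_l0 (F G : Aelt K V Ar) r : (forall s, F s = 0) -> mulA F G r = 0.
Proof.
move=> H; rewrite /Defs.mulA; case: (inB r) => //.
by rewrite big1 // => i _; rewrite H mul0r.
Qed.

Lemma mulA_r0 (F G : Aelt K V Ar) r : (forall s, G s = 0) -> mulA F G r = 0.
Proof.
move=> H; rewrite /Defs.mulA; case: (inB r) => //.
by rewrite big1 // => i _; rewrite H mulr0.
Qed.

Lemma mulA_nzl (F G : Aelt K V Ar) r : mulA F G r != 0 -> exists s, F s != 0.
Proof.
move=> nz; case: (boolP [exists i : 'I_(size r.2).+1, F (sub r 0 i) != 0]).
  by case/existsP => i; exists (sub r 0 i).
move/existsPn => H; move: nz; rewrite /Defs.mulA; case: (inB r); rewrite ?eqxx //.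
by rewrite big1 ?eqxx // => i _; move: (H i); rewrite negbK => /eqP ->; rewrite mul0r.
Qed.

Lemma mulA_nzr (F G : Aelt K V Ar) r : mulA F G r != 0 -> exists s, G s != 0.
Proof.
move=> nz; case: (boolP [exists i : 'I_(size r.2).+1, G (sub r i (size r.2)) != 0]).
  by case/existsP => i; exists (sub r i (size r.2)).
move/existsPn => H; move: nz; rewrite /Defs.mulA; case: (inB r); rewrite ?eqxx //.
by rewrite big1 ?eqxx // => i _; move: (H i); rewrite negbK => /eqP ->; rewrite mulr0.
Qed.

Lemma sum_nz n (F : 'I_n -> K) : \sum_(i < n) F i != 0 -> exists i, F i != 0.
Proof.
move=> nz; case: (boolP [exists i, F i != 0]); first by case/existsP => i; exists i.
move/existsPn => H; move: nz; rewrite big1 ?eqxx // => i _.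
by move: (H i); rewrite negbK => /eqP.
Qed.

Lemma dcoch_ext n (f f' : cochain K V Ar) q r :
  (forall i j b, (i <= j)%N -> inB r -> r.2 = take i q.2 ++ b.2 ++ drop j q.2 ->
     f (sub q i j) b = f' (sub q i j) b) ->
  dcoch src tgt rels n f q r = dcoch src tgt rels n f' q r.
Proof.
move=> H; rewrite /dcoch; case: ifP => _.
  apply: eq_bigr => i _; apply: eq_bigr => j _.
  case: ifP => // /andP[ij _].
  apply: mulA_ext3 => b Br eb; apply: H => //.
  by rewrite eb sub_0 sub_S.
congr (_ - _).
  apply: mulA_extl => b Br eb; apply: H => //; first exact: leq_subr.
  by rewrite eb sub_0 drop_size cats0.
apply: mulA_extr => b Br eb; apply: H => //.
by rewrite eb sub_S take0.
Qed.

Lemma dcoch_0 n (f : cochain K V Ar) q r :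
  (forall p s, f p s = 0) -> dcoch src tgt rels n f q r = 0.
Proof.
move=> H; rewrite /dcoch; case: ifP => _.
  rewrite big1 // => i _; rewrite big1 // => j _.
  case: ifP => // _; apply: mulA_l0 => s; exact: mulA_r0.
rewrite mulA_r0 // mulA_l0 // subr0 //.
Qed.

End Alg.

Lemma uniq_catl_mem (T : eqType) (e s : seq T) z : uniq (e ++ s) -> z \in e -> (z \in s) = false.
Proof.
rewrite cat_uniq => /and3P[_ /hasPn H _] ze; apply/negP => zs.
by move: (H z zs); rewrite /= ze.
Qed.

Lemma uniq_catr_mem (T : eqType) (s a : seq T) z : uniq (s ++ a) -> z \in a -> (z \in s) = false.
Proof.
rewrite cat_uniq => /and3P[_ /hasPn H _] za; apply/negP => zs.
by move: (H z za); rewrite /= zs.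
Qed.

Lemma key_inv (T : finType) (e P a b : seq T) :
  uniq (e ++ P ++ a) -> uniq (e ++ b ++ a) ->
  [set z | (z \in e ++ P ++ a) != (z \in e ++ b ++ a)] = [set z | (z \in P) != (z \in b)].
Proof.
move=> u1 u2; apply/setP => z; rewrite !inE !mem_cat.
case ze: (z \in e) => /=.
  move/negbT: (uniq_catl_mem u1 ze); rewrite mem_cat => /norP[/negbTE -> _].
  by move/negbT: (uniq_catl_mem u2 ze); rewrite mem_cat => /norP[/negbTE -> _].
have u1' : uniq (P ++ a) by move: u1; rewrite cat_uniq => /and3P[].
have u2' : uniq (b ++ a) by move: u2; rewrite cat_uniq => /and3P[].
case za: (z \in a); last by rewrite !orbF.
by rewrite (uniq_catr_mem u1' za) (uniq_catr_mem u2' za).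
Qed.

Section Main.
Variables (K : fieldType) (V Ar : finType) (src tgt : Ar -> V) (rels : seq (seq Ar)).
Hypothesis Htri : triangular src tgt.

Local Notation sub := (@Defs.sub V Ar tgt).
Local Notation inB := (@Defs.inB V Ar src tgt rels).
Local Notation valid := (@Defs.valid V Ar src tgt).
Local Notation Gamma := (@Defs.Gamma V Ar src tgt rels).

Lemma Gamma_valid N q : Gamma N q -> valid q.
Proof. by case/andP. Qed.

Lemma Gamma_dec N q : Gamma N q -> exists us, is_left_dec rels N q.2 us.
Proof. by case/andP => _ /hasP [us _ H]; exists us. Qed.

Lemma Gamma_nil N q : Gamma N q -> q.2 != [::].
Proof.
move/Gamma_dec => [us /and5P[/eqP su /eqP fu sh _ _]].
case: us su fu sh => // u us _ <- /=.
by case: u.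
Qed.

Lemma Gamma_I N q : Gamma N.+1 q -> inI rels q.2.
Proof.
move/Gamma_dec => [us /and5P[/eqP su /eqP fu _ _ /allP H]].
have := H 0%N; rewrite mem_iota /= => /(_ isT) /andP[I01 _].
move: I01; clear H; case: us su fu => [|u0 [|u1 us]] //= _ <- I01.
move: I01; rewrite /inI catA => /hasP [r rr ir].
by apply/hasP; exists r => //; apply: infix_catr.
Qed.

Lemma inB_valid r : inB r -> valid r.
Proof. by case/andP. Qed.

Lemma sub_split (q : qpath V Ar) i j : (i <= j)%N ->
  q.2 = take i q.2 ++ (sub q i j).2 ++ drop j q.2.
Proof. by move=> ij; rewrite /Defs.sub /= take_drop_cat // cat_take_drop. Qed.

Definition keyS (P b : qpath V Ar) := [set z | (z \in P.2) != (z \in b.2)].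

Lemma keyS_inv q r i j b : valid q -> inB r -> (i <= j)%N ->
  r.2 = take i q.2 ++ b.2 ++ drop j q.2 -> keyS (sub q i j) b = keyS q r.
Proof.
move=> vq Br ij er.
have uq := valid_uniq Htri vq; have ur := valid_uniq Htri (inB_valid Br).
case: q vq uq ij er => [v w] vq uq ij er.
have := @key_inv _ (take i w) (sub (v, w) i j).2 (drop j w) b.2.
rewrite -(sub_split (v, w) ij) -er => /(_ uq ur) H.
by rewrite /keyS /= H.
Qed.

Lemma common_arrow n (x : cochain K V Ar) :
  is_cochain src tgt rels n x -> irreducible src tgt rels n x ->
  forall p0 r0, x p0 r0 != 0 ->
  exists a, forall P b, x P b != 0 -> (a \in P.2) || (a \in b.2).
Proof.
move=> Hx [Cx Irr] p0 r0 nz0.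
have restr : forall g : cochain K V Ar, (forall P b, g P b != 0 -> x P b != 0) ->
    g p0 r0 != 0 -> cocycle src tgt rels n g -> forall P b, x P b != 0 -> g P b != 0.
  move=> g sg gp0 cg P b nzx; apply/negP => gz.
  apply: (Irr g sg _ _ cg); first by exists P, b; rewrite nzx gz.
  by exists p0, r0.
have /and3P[G0 B0 /andP[/eqP e1 /eqP e2]] := Hx _ _ nz0.
case: (set_0Vmem (keyS p0 r0)) => [K0|[a aK]].
  have pe : p0.2 = r0.2.
    clear restr; move: G0 B0 e1 e2 K0; case: p0 {nz0} => [v w]; case: r0 => [v' w'] /= G0 B0 e1 e2 K0.
    subst v'; apply: (L_eq Htri (Gamma_valid G0) (inB_valid B0) e2) => z.
    move/setP: K0 => /(_ z); rewrite inE in_set0 /= => /negbFE /eqP.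
    by [].
  pose g := fun (P b : qpath V Ar) => if (P == p0) && (b == r0) then x P b else 0.
  have cg : cocycle src tgt rels n g.
    move=> q Gq r; rewrite (@dcoch_ext _ _ _ _ _ _ n _ (fun _ _ => 0) q r) ?dcoch_0 //.
    move=> i j b ij Br er; rewrite /g; case: ifP => // /andP[/eqP E1 /eqP E2].
    have rq : r.2 = q.2 by rewrite er E2 -pe -E1 -sub_split.
    have GI := Gamma_I Gq; move: Br; rewrite /Defs.inB rq => /andP[_ /negP]; done.
  have sg : forall P b, g P b != 0 -> x P b != 0.
    by move=> P b; rewrite /g; case: ifP => //; rewrite eqxx.
  have gp0 : g p0 r0 != 0 by rewrite /g !eqxx.
  have H := restr g sg gp0 cg.
  have := Gamma_nil G0; case E: p0.2 => [|a w] // _.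
  exists a => P b nzx; move: (H P b nzx).
  rewrite /g; case: ifP => [/andP[/eqP -> _]|]; last by rewrite eqxx.
  by rewrite E inE eqxx.
pose g := fun (P b : qpath V Ar) => if keyS P b == keyS p0 r0 then x P b else 0.
have cg : cocycle src tgt rels n g.
  move=> q Gq r; case: (boolP (keyS q r == keyS p0 r0)) => kq.
    rewrite (@dcoch_ext _ _ _ _ _ _ n _ x q r); first exact: (Cx q Gq r).
    move=> i j b ij Br er.
    by rewrite /g (keyS_inv (Gamma_valid Gq) Br ij er) kq.
  rewrite (@dcoch_ext _ _ _ _ _ _ n _ (fun _ _ => 0) q r) ?dcoch_0 //.
  move=> i j b ij Br er.
  by rewrite /g (keyS_inv (Gamma_valid Gq) Br ij er) (negbTE kq).
have sg : forall P b, g P b != 0 -> x P b != 0.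
  by move=> P b; rewrite /g; case: ifP => //; rewrite eqxx.
have gp0 : g p0 r0 != 0 by rewrite /g !eqxx.
have H := restr g sg gp0 cg.
exists a => P b nzx; move: (H P b nzx).
rewrite /g; case: ifP => [/eqP kP _|]; last by rewrite eqxx.
by move: aK; rewrite -kP inE; case: (a \in P.2); case: (a \in b.2).
Qed.

End Main.

Section Fin.
Variables (K : fieldType) (V Ar : finType) (src tgt : Ar -> V) (rels : seq (seq Ar)).
Hypothesis Htri : triangular src tgt.

Local Notation sub := (@Defs.sub V Ar tgt).
Local Notation Gamma := (@Defs.Gamma V Ar src tgt rels).

Lemma cup_nz a b (g f : cochain K V Ar) q r :
  cup src tgt rels a b g f q r != 0 ->
  exists i1 i2 i3 i4 : nat, [&& (i1 <= i2)%N, (i2 <= i3)%N, (i3 <= i4)%N,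
      Gamma a (sub q i1 i2) & Gamma b (sub q i3 i4)] /\
    (exists s, g (sub q i1 i2) s != 0) /\ (exists s, f (sub q i3 i4) s != 0).
Proof.
rewrite /cup => /sum_nz [i1] /sum_nz [i2] /sum_nz [i3] /sum_nz [i4].
case: ifP; last by rewrite eqxx.
move=> C nz; exists i1, i2, i3, i4; split => //.
have [s1 /mulA_nzl [s2 /mulA_nzl [s3 /mulA_nzr Hg]]] := mulA_nzl nz.
have [s4 /mulA_nzr Hf] := mulA_nzl nz.
by split.
Qed.

Lemma supp_R n (x : cochain K V Ar) P b al :
  is_cochain src tgt rels n x -> x P b != 0 -> (al \in P.2) || (al \in b.2) ->
  R src tgt P.1 (src al) /\ R src tgt (tgt al) (ptgt tgt P).
Proof.
move=> Hx nz.
have /and3P[GP Bb /andP[/eqP e1 /eqP e2]] := Hx _ _ nz.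
case/orP => ain.
  case: P GP e1 e2 ain {nz} => v w GP _ _ ain.
  exact: (R_mem (Gamma_valid GP) ain).
rewrite e1 e2; case: b Bb e1 e2 ain {nz} => v w Bb _ _ ain.
exact: (R_mem (inB_valid Bb) ain).
Qed.

End Fin.

Theorem mainTheorem13 (K : fieldType) (V Ar : finType) (src tgt : Ar -> V)
    (rels : seq (seq Ar))
    (Hrels : forall r, r \in rels -> (1 < size r)%N && chainw src tgt r)
    (Htri : triangular src tgt)
    (m n : nat) (hm : (0 < m)%N) (hn : (0 < n)%N)
    (x y : cochain K V Ar)
    (Hx : is_cochain src tgt rels m.-1 x) (Hy : is_cochain src tgt rels n.-1 y)
    (Ix : irreducible src tgt rels m.-1 x) (Iy : irreducible src tgt rels n.-1 y)
    (Hxy : ~ cochain_zero src tgt rels (m + n).-1 (cup src tgt rels m.-1 n.-1 x y)) :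
  cochain_zero src tgt rels (n + m).-1 (cup src tgt rels n.-1 m.-1 y x).
Proof.
move=> q' Gq' r'.
case: (eqVneq (cup src tgt rels n.-1 m.-1 y x q' r') 0) => // nz'.
exfalso; apply: Hxy => q Gq r.
case: (eqVneq (cup src tgt rels m.-1 n.-1 x y q r) 0) => // nz.
exfalso.
have [i1 [i2 [i3 [i4 [/and5P[l12 l23 l34 GX GY] [[r2 nx] [r1 ny]]]]]]] := cup_nz nz.
have [j1 [j2 [j3 [j4 [/and5P[m12 m23 m34 GY' GX'] [[s1 ny'] [s2 nx']]]]]]] := cup_nz nz'.
have [al Hal] := common_arrow Htri Hx Ix nx.
have [be Hbe] := common_arrow Htri Hy Iy ny.
have vq := Gamma_valid Gq; have vq' := Gamma_valid Gq'.
have [X1 X2] := supp_R Hx nx (Hal _ _ nx).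
have [Y1 Y2] := supp_R Hy ny (Hbe _ _ ny).
have [Y1' Y2'] := supp_R Hy ny' (Hbe _ _ ny').
have [X1' X2'] := supp_R Hx nx' (Hal _ _ nx').
rewrite sub_fst in X1; rewrite sub_fst in Y1; rewrite sub_fst in Y1'; rewrite sub_fst in X1'.
rewrite sub_ptgt // in X2; rewrite sub_ptgt // in Y2; rewrite sub_ptgt // in Y2'; rewrite sub_ptgt // in X2'.
apply: (R_cycle Htri (a := al)).
apply: R_trans X2' _; apply: R_trans (R_sub vq' m23) _.
apply: R_trans Y1' _; apply: R_trans (@R_arrow _ _ src tgt be) _.
apply: R_trans Y2 _; apply: R_trans (R_sub vq l23) _.
exact: X1.
Qed.
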